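(* Let $(\omega,\rho)$ be a linear $\mathrm{SU}(3)$-structure on $\mathbb R^6$ and let $\alpha\in\Lambda^2(\mathbb R^6)^*$. Then \begin{enumerate} \item $\|\alpha\|^2+\big\|\tfrac12\omega^2\wedge\alpha\big\|^2=\|\alpha\wedge\omega\|^2\le 4\|\alpha\|^2$; \item $\|\alpha^3\|^2\le 6\|\alpha\|^6$, \end{enumerate} where $\|\cdot\|$ is the norm on forms induced by the scalar product defined by the $\mathrm{SU}(3)$-structure.
   Context: A linear $\mathrm{SU}(3)$-structure on $\mathbb R^6$ is a pair $(\omega,\rho)$, $\omega\in\Lambda^2(\mathbb R^6)^*$, $\rho\in\Lambda^3(\mathbb R^6)^*$, such that for some basis $\{e^1,\dots,e^6\}$ of $(\mathbb R^6)^*$ one has $\omega=e^{12}+e^{34}+e^{56}$ and $\rho=\mathrm{Re}\big((e^1+ie^2)\wedge(e^3+ie^4)\wedge(e^5+ie^6)\big)$; the induced scalar product is the one making this basis orthonormal, extended to forms so that the $e^{i_1\cdots i_k}$ ($i_1<\dots<i_k$) are orthonormal. *)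

(* Defs.v *)
From HB Require Import structures.
From mathcomp Require Import all_boot all_order all_algebra.
Set Implicit Arguments. Unset Strict Implicit. Unset Printing Implicit Defensive.
Import Order.TTheory GRing.Theory Num.Theory.
Local Open Scope ring_scope.

(* A (mixed-degree) form on R^6: its coefficients on the standard basis
   dx^I = dx^{i_1} /\ ... /\ dx^{i_k}  (i_1 < ... < i_k), I : {set 'I_6}. *)
Definition xform (R : nzRingType) := {ffun {set 'I_6} -> R}.

Section Forms.
Variable R : comNzRingType.

Definition is_kform (k : nat) (phi : xform R) : Prop :=
  forall I : {set 'I_6}, #|I| != k -> phi I = 0.

(* sign of the permutation sorting the concatenation of I and J (I, J sorted) *)
Definition wsign (I J : {set 'I_6}) : R :=
  (-1) ^+ #|[set p : 'I_6 * 'I_6 | (p.1 \in I) && (p.2 \in J) && (p.2 < p.1)%N]|.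

Definition wedge (phi psi : xform R) : xform R :=
  [ffun K => \sum_(I : {set 'I_6}) \sum_(J : {set 'I_6})
      if (I :|: J == K) && (I :&: J == set0) then wsign I J * phi I * psi J else 0].

Definition one_form0 : xform R := [ffun K => (K == set0)%:R].

Definition oneform (v : 'rV[R]_6) : xform R :=
  [ffun K => \sum_(j : 'I_6) if K == [set j] then v 0 j else 0].

(* Algebra endomorphism of forms induced by dx^j |-> sum_i S j i dx^i,
   i.e. dx^J |-> /\_{j in J, increasing} (row j S). *)
Definition ext_map (S : 'M[R]_6) (phi : xform R) : xform R :=
  [ffun K => \sum_(J : {set 'I_6})
      phi J * (\big[wedge/one_form0]_(j in J) oneform (row j S)) K].

(* The basis e^1..e^6 of (R^6)^*: e^(i+1) is the 1-form whose standard
   coordinates are row i of E.  e^{I} = e^{i_1} /\ ... /\ e^{i_k}. *)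
Definition ebasis (E : 'M[R]_6) (i : 'I_6) : xform R := oneform (row i E).
Definition ebasisI (E : 'M[R]_6) (I : {set 'I_6}) : xform R :=
  \big[wedge/one_form0]_(i in I) ebasis E i.
End Forms.

(* Coordinates of phi in the basis {e^I}: since ext_map E dx^I = e^I and
   ext_map is functorial, phi = sum_I c_I e^I with c = ext_map E^{-1} phi. *)
Definition ecoords (R : comUnitRingType) (E : 'M[R]_6) (phi : xform R) : xform R :=
  ext_map (invmx E) phi.

(* Squared norm for the scalar product making the e^I orthonormal. *)
Definition sqnorm (R : comUnitRingType) (E : 'M[R]_6) (phi : xform R) : R :=
  \sum_(I : {set 'I_6}) (ecoords E phi I) ^+ 2.

(* 0-based indices: e^1 = ebasis E 0, ..., e^6 = ebasis E 5 *)
Definition i0 : 'I_6 := @Ordinal 6 0 isT.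
Definition i1 : 'I_6 := @Ordinal 6 1 isT.
Definition i2 : 'I_6 := @Ordinal 6 2 isT.
Definition i3 : 'I_6 := @Ordinal 6 3 isT.
Definition i4 : 'I_6 := @Ordinal 6 4 isT.
Definition i5 : 'I_6 := @Ordinal 6 5 isT.

Definition su3_omega (R : comNzRingType) (E : 'M[R]_6) : xform R :=
  wedge (ebasis E i0) (ebasis E i1) + wedge (ebasis E i2) (ebasis E i3)
  + wedge (ebasis E i4) (ebasis E i5).

(* rho = Re((e^1 + i e^2) /\ (e^3 + i e^4) /\ (e^5 + i e^6))
       = e^135 - e^146 - e^236 - e^245 *)
Definition su3_rho (R : comNzRingType) (E : 'M[R]_6) : xform R :=
  let e := ebasis E in
  wedge (e i0) (wedge (e i2) (e i4)) - wedge (e i0) (wedge (e i3) (e i5))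
  - wedge (e i1) (wedge (e i2) (e i5)) - wedge (e i1) (wedge (e i3) (e i4)).

Definition su3_adapted (R : comUnitRingType) (E : 'M[R]_6) (omega rho : xform R) : Prop :=
  [/\ E \in unitmx, omega = su3_omega E & rho = su3_rho E].

(* Main.v *)
Require Import Defs.
From HB Require Import structures.
From mathcomp Require Import all_boot all_order all_algebra.
From mathcomp Require Import ring lra.
Set Warnings "-notation-overridden,-ambiguous-paths,-notation-incompatible-prefix".
Set Implicit Arguments. Unset Strict Implicit. Unset Printing Implicit Defensive.
Import Order.TTheory GRing.Theory Num.Theory.
Local Open Scope ring_scope.

Section Ext.
Variable R : realFieldType.
Local Notation X := (xform R).
Implicit Types (phi psi chi : X) (I J K L M T : {set 'I_6}) (S : 'M[R]_6).

Definition D I : X := [ffun K => (K == I)%:R].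
Definition sc (c : R) phi : X := [ffun K => c * phi K].

Definition N I J := #|[set p : 'I_6 * 'I_6 | (p.1 \in I) && (p.2 \in J) && (p.2 < p.1)%N]|.
Lemma wsignE I J : wsign R I J = (-1) ^+ N I J. Proof. by []. Qed.

Definition wc I J K : R := if (I :|: J == K) && (I :&: J == set0) then wsign R I J else 0.

Lemma wedgeE2 phi psi K : wedge phi psi K = \sum_I \sum_J phi I * psi J * wc I J K.
Proof.
rewrite ffunE; apply: eq_bigr => I _; apply: eq_bigr => J _.
by rewrite /wc; case: ifP => _; [ring | rewrite mulr0].
Qed.

Lemma sum_wc_l I J (f : {set 'I_6} -> R) :
  \sum_L wc I J L * f L = if I :&: J == set0 then wsign R I J * f (I :|: J) else 0.
Proof.
rewrite (bigD1 (I :|: J)) //= big1 ?addr0.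
  by rewrite /wc eqxx /=; case: ifP => _; rewrite ?mul0r.
by move=> L nL; rewrite /wc eq_sym (negbTE nL) /= mul0r.
Qed.

Lemma N_Ul I J M : I :&: J = set0 -> N (I :|: J) M = (N I M + N J M)%N.
Proof.
move=> dIJ; rewrite /N -cardsUI.
set A := [set p | _]; set B := [set p | _]; set C := [set p | _].
have -> : A = B :|: C.
  by apply/setP => p; rewrite !inE !andb_orl.
suff -> : B :&: C = set0 by rewrite cards0 addn0.
apply/setP => p; rewrite !inE; apply/negbTE; apply/negP => /andP[/andP[/andP[h1 _] _] /andP[/andP[h2 _] _]].
by move/setP: dIJ => /(_ p.1); rewrite !inE h1 h2.
Qed.

Lemma N_Ur I J M : J :&: M = set0 -> N I (J :|: M) = (N I J + N I M)%N.
Proof.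
move=> dJM; rewrite /N -cardsUI.
set A := [set p | _]; set B := [set p | _]; set C := [set p | _].
have -> : A = B :|: C.
  by apply/setP => p; rewrite !inE andb_orr andb_orl.
suff -> : B :&: C = set0 by rewrite cards0 addn0.
apply/setP => p; rewrite !inE; apply/negbTE; apply/negP => /andP[/andP[/andP[_ h1] _] /andP[/andP[_ h2] _]].
by move/setP: dJM => /(_ p.2); rewrite !inE h1 h2.
Qed.

Lemma wc_assoc I J M K :
  \sum_L wc I J L * wc L M K = \sum_L wc J M L * wc I L K.
Proof.
rewrite sum_wc_l (eq_bigr (fun L => wc J M L * wc I L K)) //.
rewrite sum_wc_l /wc setUA.
case: (boolP (I :&: J == set0)) => dIJ; case: (boolP (J :&: M == set0)) => dJM /=;
  rewrite ?mul0r ?mulr0 //.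
- rewrite setIUl setU_eq0 (eqP dJM) eqxx andbT.
  rewrite setIUr setU_eq0 (eqP dIJ) eqxx /=.
  case: ifP => _; rewrite ?mulr0 //.
  rewrite !wsignE -!exprD N_Ul ?(eqP dIJ) // N_Ur ?(eqP dJM) //.
  by congr (_ ^+ _); rewrite addnA [(N I J + _)%N]addnC addnA addnC addnA.
- rewrite setIUl setU_eq0 (negbTE dJM) !andbF.
  by rewrite ?mulr0 ?mul0r.
- rewrite setIUr setU_eq0 (negbTE dIJ) /= !andbF.
  by rewrite ?mulr0 ?mul0r.
Qed.

Lemma wedgeA phi psi chi : wedge phi (wedge psi chi) = wedge (wedge phi psi) chi.
Proof.
apply/ffunP => K; rewrite !wedgeE2.
transitivity (\sum_I \sum_J \sum_M phi I * psi J * chi M * \sum_L wc J M L * wc I L K).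
  apply: eq_bigr => I _.
  under eq_bigr => L _ do rewrite wedgeE2 mulr_sumr mulr_suml.
  rewrite exchange_big; apply: eq_bigr => J _.
  under eq_bigr => L _ do rewrite mulr_sumr mulr_suml.
  rewrite exchange_big; apply: eq_bigr => M _.
  by rewrite mulr_sumr; apply: eq_bigr => L _; ring.
symmetry.
transitivity (\sum_M \sum_I \sum_J phi I * psi J * chi M * \sum_L wc I J L * wc L M K).
  rewrite exchange_big; apply: eq_bigr => M _.
  under eq_bigr => L _ do rewrite wedgeE2 mulr_suml mulr_suml.
  rewrite exchange_big; apply: eq_bigr => I _.
  under eq_bigr => L _ do rewrite mulr_suml mulr_suml.
  rewrite exchange_big; apply: eq_bigr => J _.
  by rewrite mulr_sumr; apply: eq_bigr => L _; ring.
rewrite exchange_big; apply: eq_bigr => I _.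
rewrite exchange_big; apply: eq_bigr => J _.
by apply: eq_bigr => M _; rewrite wc_assoc.
Qed.


Lemma addfE phi psi K : (phi + psi) K = phi K + psi K. Proof. by rewrite ffunE. Qed.
Lemma oppfE phi K : (- phi) K = - phi K. Proof. by rewrite ffunE. Qed.
Lemma zerofE K : (0 : X) K = 0. Proof. by rewrite ffunE. Qed.
Lemma scE c phi K : sc c phi K = c * phi K. Proof. by rewrite ffunE. Qed.
Lemma DE I K : D I K = (K == I)%:R. Proof. by rewrite ffunE. Qed.
Lemma sumfE (T : Type) (r : seq T) (P : pred T) (F : T -> X) K :
  (\sum_(i <- r | P i) F i) K = \sum_(i <- r | P i) F i K.
Proof. exact: sum_ffunE. Qed.

Lemma true1 : (true%:R : R) = 1. Proof. by []. Qed.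
Lemma false0 : (false%:R : R) = 0. Proof. by []. Qed.

Lemma sum_eq1 (f : {set 'I_6} -> R) K : \sum_J f J * (J == K)%:R = f K.
Proof.
rewrite (bigD1 K) //= eqxx mulr1 big1 ?addr0 // => J /negbTE ->; by rewrite mulr0.
Qed.

Lemma N0l J : N set0 J = 0%N.
Proof. by apply/eqP; rewrite cards_eq0; apply/eqP/setP => p; rewrite !inE. Qed.
Lemma N0r I : N I set0 = 0%N.
Proof. by apply/eqP; rewrite cards_eq0; apply/eqP/setP => p; rewrite !inE andbF. Qed.

Lemma wedge1l phi : wedge (one_form0 R) phi = phi.
Proof.
apply/ffunP => K; rewrite wedgeE2 (bigD1 set0) //= [X in _ + X]big1 ?addr0; last first.
  by move=> I nI; apply: big1 => J _; rewrite ffunE (negbTE nI) !mul0r.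
rewrite -[RHS](sum_eq1 phi); apply: eq_bigr => J _; rewrite ffunE eqxx true1 mul1r.
by rewrite /wc set0U set0I eqxx andbT wsignE N0l expr0; case: eqP.
Qed.

Lemma wedge1r phi : wedge phi (one_form0 R) = phi.
Proof.
apply/ffunP => K; rewrite wedgeE2 -[RHS](sum_eq1 phi); apply: eq_bigr => I _.
rewrite (bigD1 set0) //= big1 ?addr0; last first.
  by move=> J nJ; rewrite ffunE (negbTE nJ) mulr0 mul0r.
by rewrite ffunE eqxx true1 mulr1 /wc setU0 setI0 eqxx andbT wsignE N0r expr0; case: eqP.
Qed.

Lemma wedgeDl phi1 phi2 psi : wedge (phi1 + phi2) psi = wedge phi1 psi + wedge phi2 psi.
Proof.
apply/ffunP => K; rewrite addfE !wedgeE2 -big_split; apply: eq_bigr => I _.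
by rewrite -big_split; apply: eq_bigr => J _; rewrite addfE !mulrDl.
Qed.
Lemma wedgeDr phi psi1 psi2 : wedge phi (psi1 + psi2) = wedge phi psi1 + wedge phi psi2.
Proof.
apply/ffunP => K; rewrite addfE !wedgeE2 -big_split; apply: eq_bigr => I _.
by rewrite -big_split; apply: eq_bigr => J _; rewrite addfE mulrDr mulrDl.
Qed.
Lemma wedgeZl c phi psi : wedge (sc c phi) psi = sc c (wedge phi psi).
Proof.
apply/ffunP => K; rewrite scE !wedgeE2 mulr_sumr; apply: eq_bigr => I _.
by rewrite mulr_sumr; apply: eq_bigr => J _; rewrite scE; ring.
Qed.
Lemma wedgeZr c phi psi : wedge phi (sc c psi) = sc c (wedge phi psi).
Proof.
apply/ffunP => K; rewrite scE !wedgeE2 mulr_sumr; apply: eq_bigr => I _.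
by rewrite mulr_sumr; apply: eq_bigr => J _; rewrite scE; ring.
Qed.
Lemma wedge0l psi : wedge 0 psi = 0.
Proof.
apply/ffunP => K; rewrite zerofE wedgeE2 big1 // => I _; apply: big1 => J _.
by rewrite zerofE !mul0r.
Qed.
Lemma wedge0r phi : wedge phi 0 = 0.
Proof.
apply/ffunP => K; rewrite zerofE wedgeE2 big1 // => I _; apply: big1 => J _.
by rewrite zerofE mulr0 mul0r.
Qed.
Lemma wedgeNl phi psi : wedge (- phi) psi = - wedge phi psi.
Proof.
apply/ffunP => K; rewrite oppfE !wedgeE2 -sumrN; apply: eq_bigr => I _.
by rewrite -sumrN; apply: eq_bigr => J _; rewrite oppfE; ring.
Qed.
Lemma wedge_suml (T : Type) (r : seq T) (P : pred T) (F : T -> X) psi :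
  wedge (\sum_(i <- r | P i) F i) psi = \sum_(i <- r | P i) wedge (F i) psi.
Proof.
elim/big_rec2: _ => [|i y1 y2 _ <-]; first exact: wedge0l.
exact: wedgeDl.
Qed.
Lemma wedge_sumr (T : Type) (r : seq T) (P : pred T) (F : T -> X) phi :
  wedge phi (\sum_(i <- r | P i) F i) = \sum_(i <- r | P i) wedge phi (F i).
Proof.
elim/big_rec2: _ => [|i y1 y2 _ <-]; first exact: wedge0r.
exact: wedgeDr.
Qed.

Lemma wedge_DD I J : wedge (D I) (D J) =
  if [disjoint I & J] then sc (wsign R I J) (D (I :|: J)) else 0.
Proof.
apply/ffunP => K; rewrite wedgeE2 (bigD1 I) //= [X in _ + X]big1 ?addr0; last first.
  by move=> I' nI; apply: big1 => J' _; rewrite DE (negbTE nI) !mul0r.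
rewrite (bigD1 J) //= [X in _ + X]big1 ?addr0; last first.
  by move=> J' nJ; rewrite !DE (negbTE nJ) mulr0 mul0r.
rewrite !DE !eqxx true1 !mul1r /wc setI_eq0.
case: (boolP [disjoint I & J]) => dIJ; last by rewrite andbF zerofE.
by rewrite andbT scE DE eq_sym; case: eqP => _; rewrite ?true1 ?mulr1 ?mulr0.
Qed.

Lemma N11 (i j : 'I_6) : N [set i] [set j] = (j < i)%N.
Proof.
case: (ltnP j i) => h.
  rewrite /N (_ : [set p | _] = [set (i, j)]) ?cards1 //.
  apply/setP => p; rewrite !inE; case: p => a b /=.
  apply/andP/eqP => [[/andP[/eqP -> /eqP ->] _]|[-> ->]] //.
  by rewrite !eqxx h.
apply/eqP; rewrite cards_eq0; apply/eqP/setP => p; rewrite !inE.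
case: p => a b /=; apply/negbTE; apply/negP => /andP[/andP[/eqP -> /eqP ->]].
by rewrite ltnNge h.
Qed.

Lemma wedge_D11 (i j : 'I_6) :
  wedge (D [set i]) (D [set j]) = - wedge (D [set j]) (D [set i]).
Proof.
rewrite !wedge_DD !disjoints1 !in_set1 eq_sym.
case: eqP => [->|/eqP ne]; first by rewrite oppr0.
apply/ffunP => K; rewrite oppfE !scE setUC !wsignE !N11.
case: (ltngtP i j) => h; rewrite ?expr0 ?expr1 ?mulN1r ?opprK ?mul1r //.
by move: ne; rewrite eq_sym -val_eqE /= h eqxx.
Qed.


Lemma scA a b phi : sc a (sc b phi) = sc (a * b) phi.
Proof. by apply/ffunP => K; rewrite !scE mulrA. Qed.
Lemma scN c phi : sc c (- phi) = - sc c phi.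
Proof. by apply/ffunP => K; rewrite !(scE, oppfE) mulrN. Qed.
Lemma sc0 c : sc c 0 = 0.
Proof. by apply/ffunP => K; rewrite !(scE, zerofE) mulr0. Qed.
Lemma sc1 phi : sc 1 phi = phi.
Proof. by apply/ffunP => K; rewrite scE mul1r. Qed.
Lemma sc_sum (T : Type) (r : seq T) (P : pred T) (F : T -> X) c :
  sc c (\sum_(i <- r | P i) F i) = \sum_(i <- r | P i) sc c (F i).
Proof. by apply/ffunP => K; rewrite scE !sumfE mulr_sumr; apply: eq_bigr => i _; rewrite scE. Qed.

Lemma oneform_sum (v : 'rV[R]_6) : oneform v = \sum_j sc (v 0 j) (D [set j]).
Proof.
apply/ffunP => K; rewrite ffunE sumfE; apply: eq_bigr => j _; rewrite scE DE.
by case: eqP => _; rewrite ?true1 ?mulr1 ?mulr0.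
Qed.

Lemma wedge_oneE (v w : 'rV[R]_6) : wedge (oneform v) (oneform w) =
  \sum_i \sum_j sc (v 0 i * w 0 j) (wedge (D [set i]) (D [set j])).
Proof.
rewrite !oneform_sum wedge_suml; apply: eq_bigr => i _.
rewrite wedgeZl wedge_sumr sc_sum; apply: eq_bigr => j _.
by rewrite wedgeZr scA.
Qed.

Lemma wedge_one_anti (v w : 'rV[R]_6) :
  wedge (oneform v) (oneform w) = - wedge (oneform w) (oneform v).
Proof.
rewrite !wedge_oneE.
under eq_bigr do under eq_bigr do rewrite wedge_D11 scN.
rewrite exchange_big -sumrN; apply: eq_bigr => j _.
by rewrite -sumrN; apply: eq_bigr => i _; rewrite mulrC.
Qed.

Lemma wedge_one_sq (v : 'rV[R]_6) : wedge (oneform v) (oneform v) = 0.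
Proof.
have h := wedge_one_anti v v.
apply/ffunP => K; move/ffunP/(_ K): h; rewrite oppfE zerofE => h; lra.
Qed.

Definition th (S : 'M[R]_6) T : X := \big[@wedge R/one_form0 R]_(j in T) oneform (row j S).
Definition u (S : 'M[R]_6) (j : 'I_6) : X := oneform (row j S).

Lemma sorted_enum_lt (A : {set 'I_6}) : sorted (fun a b : 'I_6 => (a < b)%N) (enum A).
Proof.
rewrite /enum_mem -enumT; apply: sorted_filter; first by move=> a b c; exact: ltn_trans.
have := iota_ltn_sorted 0 6; rewrite -val_enum_ord sorted_map; exact.
Qed.

Lemma enum_U1 m T : m \notin T -> (forall t, t \in T -> (m < t)%N) ->
  enum (m |: T) = m :: enum T.
Proof.
move=> mT mlt; apply: (@irr_sorted_eq _ (fun a b : 'I_6 => (a < b)%N)).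
- by move=> a b c; exact: ltn_trans.
- by move=> a; exact: ltnn.
- exact: sorted_enum_lt.
- rewrite /= path_sortedE; last by move=> a b c; exact: ltn_trans.
  rewrite sorted_enum_lt andbT; apply/allP => t; rewrite mem_enum; exact: mlt.
- by move=> x; rewrite inE !mem_enum !inE.
Qed.

Lemma th0 S : th S set0 = one_form0 R.
Proof. by rewrite /th big_set0. Qed.

Lemma big_in_enum (A : {set 'I_6}) (F : 'I_6 -> X) :
  \big[@wedge R/one_form0 R]_(j in A) F j = \big[@wedge R/one_form0 R]_(j <- enum A) F j.
Proof.
by rewrite -big_filter; congr bigop.
Qed.

Lemma th_U1 S m T : m \notin T -> (forall t, t \in T -> (m < t)%N) ->
  th S (m |: T) = wedge (u S m) (th S T).
Proof. by move=> mT mlt; rewrite /th !big_in_enum enum_U1 // big_cons. Qed.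

Lemma th1 S m : th S [set m] = u S m.
Proof. rewrite -[[set m]]setU0 th_U1; [by rewrite th0 wedge1r | by rewrite inE | by move=> t; rewrite inE]. Qed.

Lemma set_ind (P : {set 'I_6} -> Prop) : P set0 ->
  (forall m T, m \notin T -> (forall t, t \in T -> (m < t)%N) -> P T -> P (m |: T)) ->
  forall T, P T.
Proof.
move=> P0 PS T; move: {2}#|T| (erefl #|T|) => n; elim: n T => [|n IH] T cT.
  by rewrite (cards0_eq cT).
have : T != set0 by rewrite -card_gt0 cT.
case/set0Pn => x xT.
pose m := [arg min_(i < x in T) (i : nat)].
have [mT mmin] : m \in T /\ forall t, t \in T -> (m <= t)%N.
  by rewrite /m; case: arg_minnP => // i iT imin; split.
rewrite -(setD1K mT); apply: PS.
- by rewrite setD11.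
- move=> t /setD1P [tm tT]; rewrite ltn_neqAle mmin // andbT.
  by apply: contra tm => /eqP h; apply/eqP/val_inj.
- by apply: IH; move: cT; rewrite (cardsD1 m) mT add1n => -[].
Qed.


Lemma N1_small (x : 'I_6) T : (forall t, t \in T -> (x <= t)%N) -> N [set x] T = 0%N.
Proof.
move=> h; apply/eqP; rewrite cards_eq0; apply/eqP/setP => -[a b]; rewrite !inE /=.
apply/negbTE; apply/negP => /andP[/andP[/eqP -> bT] ltbx].
by move: (h b bT); rewrite leqNgt ltbx.
Qed.

Lemma sc_opp c phi : - sc c phi = sc (- c) phi.
Proof. by apply/ffunP => K; rewrite !(scE, oppfE) mulNr. Qed.

Lemma u_anti S a b : wedge (u S a) (u S b) = - wedge (u S b) (u S a).
Proof. exact: wedge_one_anti. Qed.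
Lemma u_sq S a : wedge (u S a) (u S a) = 0.
Proof. exact: wedge_one_sq. Qed.

Lemma ins (S : 'M[R]_6) (x : 'I_6) T : wedge (u S x) (th S T) =
  if x \in T then 0 else sc (wsign R [set x] T) (th S (x |: T)).
Proof.
elim/set_ind: T => [|m T mT mlt IH].
  by rewrite th0 wedge1r inE wsignE N0r expr0 sc1 setU0 th1.
rewrite th_U1 //.
case: (ltngtP x m) => h.
- have xT : x \notin m |: T.
    rewrite !inE negb_or; apply/andP; split.
      by apply/eqP => xm; move: h; rewrite xm ltnn.
    by apply/negP => /mlt; rewrite ltnNge ltnW.
  rewrite (negbTE xT) wsignE N1_small ?expr0 ?sc1; last first.
    move=> t; rewrite !inE => /orP[/eqP -> | /mlt]; first exact: ltnW.
    by move=> mt; apply: ltnW; apply: ltn_trans mt.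
  rewrite th_U1 // ?th_U1 //.
  move=> t; rewrite !inE => /orP[/eqP -> // | /mlt]; by apply: ltn_trans.
- rewrite wedgeA u_anti wedgeNl -wedgeA IH !inE.
  have xm : (x == m) = false by apply/negbTE/eqP => xm; move: h; rewrite xm ltnn.
  rewrite xm /=; case: (boolP (x \in T)) => xT; first by rewrite wedge0r oppr0.
  rewrite wedgeZr -th_U1; last first.
  + move=> t; rewrite !inE => /orP[/eqP -> // | /mlt //].
  + by rewrite !inE negb_or mT andbT eq_sym xm.
  rewrite sc_opp setUCA !wsignE N_Ur; last first.
    by apply/setP => t; rewrite !inE; apply/negbTE/andP => -[/eqP -> ]; rewrite (negbTE mT).
  by rewrite N11 h exprD expr1 mulN1r.
- have -> : x = m by apply: val_inj.
  by rewrite wedgeA u_sq wedge0l !inE eqxx.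
Qed.


Lemma ext_mapE S phi K : ext_map S phi K = \sum_J phi J * th S J K.
Proof. by rewrite ffunE. Qed.

Lemma ext_map_form S phi : ext_map S phi = \sum_J sc (phi J) (th S J).
Proof. by apply/ffunP => K; rewrite ext_mapE sumfE; apply: eq_bigr => J _; rewrite scE. Qed.

Lemma form_expand phi : phi = \sum_I sc (phi I) (D I).
Proof.
apply/ffunP => K; rewrite sumfE -[LHS](sum_eq1 phi); apply: eq_bigr => I _.
by rewrite scE DE eq_sym.
Qed.

Lemma ext_mapD S phi psi : ext_map S (phi + psi) = ext_map S phi + ext_map S psi.
Proof.
apply/ffunP => K; rewrite addfE !ext_mapE -big_split; apply: eq_bigr => J _.
by rewrite addfE mulrDl.
Qed.
Lemma ext_mapZ S c phi : ext_map S (sc c phi) = sc c (ext_map S phi).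
Proof.
apply/ffunP => K; rewrite scE !ext_mapE mulr_sumr; apply: eq_bigr => J _.
by rewrite scE mulrA.
Qed.
Lemma ext_map0 S : ext_map S 0 = 0.
Proof.
by apply/ffunP => K; rewrite zerofE ext_mapE big1 // => J _; rewrite zerofE mul0r.
Qed.
Lemma ext_map_sum S (T : Type) (r : seq T) (P : pred T) (F : T -> X) :
  ext_map S (\sum_(i <- r | P i) F i) = \sum_(i <- r | P i) ext_map S (F i).
Proof.
elim/big_rec2: _ => [|i y1 y2 _ <-]; first exact: ext_map0.
exact: ext_mapD.
Qed.
Lemma ext_map_D S I : ext_map S (D I) = th S I.
Proof.
apply/ffunP => K; rewrite ext_mapE (bigD1 I) //= [X in _ + X]big1 ?addr0.
  by rewrite DE eqxx true1 mul1r.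
by move=> J nJ; rewrite DE (negbTE nJ) mul0r.
Qed.

Lemma ext_map_G S (x : 'I_6) chi :
  ext_map S (wedge (D [set x]) chi) = wedge (u S x) (ext_map S chi).
Proof.
rewrite (form_expand chi) wedge_sumr !ext_map_sum wedge_sumr; apply: eq_bigr => T _.
rewrite wedgeZr !ext_mapZ wedgeZr ext_map_D wedge_DD ins disjoints1.
case: (boolP (x \in T)) => xT /=; first by rewrite ext_map0 sc0.
by rewrite ext_mapZ ext_map_D.
Qed.

Lemma D_U1 m T : m \notin T -> (forall t, t \in T -> (m < t)%N) ->
  D (m |: T) = wedge (D [set m]) (D T).
Proof.
move=> mT mlt; rewrite wedge_DD disjoints1 mT wsignE N1_small ?expr0 ?sc1 //.
by move=> t /mlt /ltnW.
Qed.

Lemma ext_map_homD S I psi :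
  ext_map S (wedge (D I) psi) = wedge (th S I) (ext_map S psi).
Proof.
elim/set_ind: I => [|m T mT mlt IH].
  by rewrite th0 (_ : D set0 = one_form0 R) // !wedge1l.
by rewrite D_U1 // -wedgeA ext_map_G IH wedgeA -th_U1.
Qed.

Lemma ext_map_hom S phi psi :
  ext_map S (wedge phi psi) = wedge (ext_map S phi) (ext_map S psi).
Proof.
rewrite (form_expand phi) wedge_suml !ext_map_sum wedge_suml; apply: eq_bigr => I _.
by rewrite wedgeZl !ext_mapZ wedgeZl ext_map_D ext_map_homD.
Qed.

Lemma ext_map_one S (v : 'rV[R]_6) : ext_map S (oneform v) = oneform (v *m S).
Proof.
rewrite oneform_sum ext_map_sum.
under eq_bigr do rewrite ext_mapZ ext_map_D th1.
apply/ffunP => K; rewrite sumfE oneform_sum sumfE.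
under eq_bigr do rewrite scE /u oneform_sum sumfE mulr_sumr.
rewrite exchange_big; apply: eq_bigr => i _.
rewrite scE !mxE mulr_suml; apply: eq_bigr => j _.
by rewrite scE mxE mulrA.
Qed.

Lemma kform_D I : is_kform #|I| (D I).
Proof. by move=> K nK; rewrite DE; case: eqP => // KI; move: nK; rewrite KI eqxx. Qed.

Lemma kform_wedge k l phi psi : is_kform k phi -> is_kform l psi ->
  is_kform (k + l) (wedge phi psi).
Proof.
move=> hp hq K nK; rewrite wedgeE2 big1 // => I _; apply: big1 => J _.
case: (boolP (#|I| == k)) => [/eqP cI|nI]; last by rewrite hp // !mul0r.
case: (boolP (#|J| == l)) => [/eqP cJ|nJ]; last by rewrite (hq J nJ) mulr0 mul0r.
rewrite /wc; case: ifP => [/andP[/eqP UK /eqP IJ0]|]; last by rewrite mulr0.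
move: nK; rewrite -UK -cI -cJ -cardsUI IJ0 cards0 addn0 eqxx //.
Qed.

Lemma kform_one (v : 'rV[R]_6) : is_kform 1 (oneform v).
Proof.
move=> K nK; rewrite ffunE big1 // => j _; case: eqP => // KE.
by move: nK; rewrite KE cards1 eqxx.
Qed.

Lemma kform_th S T : is_kform #|T| (th S T).
Proof.
elim/set_ind: T => [|m T mT mlt IH].
  by rewrite th0 cards0 (_ : one_form0 R = D set0) // -{1}(cards0 'I_6); exact: kform_D.
rewrite th_U1 // cardsU1 mT; exact: kform_wedge (kform_one _) IH.
Qed.

Lemma kform_ext S k phi : is_kform k phi -> is_kform k (ext_map S phi).
Proof.
move=> hp K nK; rewrite ext_mapE big1 // => J _.
case: (boolP (#|J| == k)) => [/eqP cJ|nJ]; last by rewrite hp // mul0r.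
by rewrite kform_th ?mulr0 // cJ.
Qed.

Lemma kform_add k phi psi : is_kform k phi -> is_kform k psi -> is_kform k (phi + psi).
Proof. by move=> hp hq K nK; rewrite addfE hp // hq // addr0. Qed.

End Ext.

Section Poly.
Variable R : realFieldType.

Lemma cs5 (y1 y2 y3 y4 y5 q1 q2 q3 q4 q5 : R) :
  (y1*q1+y2*q2+y3*q3+y4*q4+y5*q5)^+2 <=
  (y1^+2+y2^+2+y3^+2+y4^+2+y5^+2)*(q1^+2+q2^+2+q3^+2+q4^+2+q5^+2).
Proof.
have h : 0 <= (y1*q2-y2*q1)^+2 + (y1*q3-y3*q1)^+2 + (y1*q4-y4*q1)^+2 + (y1*q5-y5*q1)^+2
  + (y2*q3-y3*q2)^+2 + (y2*q4-y4*q2)^+2 + (y2*q5-y5*q2)^+2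
  + (y3*q4-y4*q3)^+2 + (y3*q5-y5*q3)^+2 + (y4*q5-y5*q4)^+2.
  by rewrite !addr_ge0 ?sqr_ge0.
rewrite -subr_ge0; apply: le_trans h _; rewrite le_eqVlt; apply/orP; left; apply/eqP; ring.
Qed.

Lemma q4 (p q r s t v : R) :
  4%:R * (p*q - r*s + t*v)^+2 <= (p^+2+q^+2+r^+2+s^+2+t^+2+v^+2)^+2.
Proof.
set T := p^+2+q^+2+r^+2+s^+2+t^+2+v^+2.
have h1 : 0 <= T - 2%:R * (p*q - r*s + t*v).
  have -> : T - 2%:R * (p*q - r*s + t*v) = (p-q)^+2 + (r+s)^+2 + (t-v)^+2 by rewrite /T; ring.
  by rewrite !addr_ge0 ?sqr_ge0.
have h2 : 0 <= T + 2%:R * (p*q - r*s + t*v).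
  have -> : T + 2%:R * (p*q - r*s + t*v) = (p+q)^+2 + (r-s)^+2 + (t+v)^+2 by rewrite /T; ring.
  by rewrite !addr_ge0 ?sqr_ge0.
rewrite -subr_ge0.
have -> : T^+2 - 4%:R * (p*q - r*s + t*v)^+2 = (T - 2%:R * (p*q - r*s + t*v)) * (T + 2%:R * (p*q - r*s + t*v)) by ring.
exact: mulr_ge0 h1 h2.
Qed.

Lemma amgm (A C : R) : 0 <= A -> 0 <= C -> 27%:R * A * C^+2 <= 4%:R * (A + C)^+3.
Proof.
move=> hA hC; rewrite -subr_ge0.
have -> : 4%:R * (A + C)^+3 - 27%:R * A * C^+2 = (C - 2%:R * A)^+2 * (4%:R * C + A) by ring.
by apply: mulr_ge0; [exact: sqr_ge0 | lra].
Qed.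


Lemma cs5' (y1 y2 y3 y4 y5 q1 q2 q3 q4 q5 Z Y Q : R) :
  Z = y1*q1+y2*q2+y3*q3+y4*q4+y5*q5 -> Y = y1^+2+y2^+2+y3^+2+y4^+2+y5^+2 ->
  Q = q1^+2+q2^+2+q3^+2+q4^+2+q5^+2 -> Z^+2 <= Y * Q.
Proof. by move=> -> -> ->; exact: cs5. Qed.

Lemma chain (Pf A C SQ ST : R) : 0 <= A -> 0 <= C -> Pf^+2 <= A * SQ ->
  4%:R * SQ <= ST -> ST <= 3%:R * C^+2 -> (6%:R * Pf)^+2 <= 6%:R * (A + C)^+3.
Proof.
move=> hA hC h1 h2 h3.
have h2' : A * (4%:R * SQ) <= A * ST by rewrite ler_wpM2l.
have h3' : A * ST <= A * (3%:R * C^+2) by rewrite ler_wpM2l.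
have h4 := amgm hA hC.
have hS : 0 <= (A + C)^+3 by rewrite exprn_ge0 // addr_ge0.
have -> : (6%:R * Pf)^+2 = 36%:R * Pf^+2 by ring.
lra.
Qed.

Lemma sq_le (T C : R) : 0 <= T -> T <= C -> T^+2 <= C * T.
Proof. by move=> h0 h1; rewrite expr2 ler_wpM2r. Qed.

Lemma pf_ineq (x01 x02 x03 x04 x05 x12 x13 x14 x15 x23 x24 x25 x34 x35 x45 P S : R) :
  P^+2 = (6%:R * (x01 * (x23*x45 - x24*x35 + x25*x34) - x02 * (x13*x45 - x14*x35 + x15*x34)
                  + x03 * (x12*x45 - x14*x25 + x15*x24) - x04 * (x12*x35 - x13*x25 + x15*x23)
                  + x05 * (x12*x34 - x13*x24 + x14*x23)))^+2 ->
  S = x01^+2 + x02^+2 + x03^+2 + x04^+2 + x05^+2 + x12^+2 + x13^+2 + x14^+2 + x15^+2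
      + x23^+2 + x24^+2 + x25^+2 + x34^+2 + x35^+2 + x45^+2 ->
  P^+2 <= 6%:R * S^+3.
Proof.
move=> -> ->.
set Q1 := x23*x45 - x24*x35 + x25*x34.
set Q2 := x13*x45 - x14*x35 + x15*x34.
set Q3 := x12*x45 - x14*x25 + x15*x24.
set Q4 := x12*x35 - x13*x25 + x15*x23.
set Q5 := x12*x34 - x13*x24 + x14*x23.
set T1 := x23^+2 + x45^+2 + x24^+2 + x35^+2 + x25^+2 + x34^+2.
set T2 := x13^+2 + x45^+2 + x14^+2 + x35^+2 + x15^+2 + x34^+2.
set T3 := x12^+2 + x45^+2 + x14^+2 + x25^+2 + x15^+2 + x24^+2.
set T4 := x12^+2 + x35^+2 + x13^+2 + x25^+2 + x15^+2 + x23^+2.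
set T5 := x12^+2 + x34^+2 + x13^+2 + x24^+2 + x14^+2 + x23^+2.
set A := x01^+2 + x02^+2 + x03^+2 + x04^+2 + x05^+2.
set C := x12^+2 + x13^+2 + x14^+2 + x15^+2 + x23^+2 + x24^+2 + x25^+2 + x34^+2 + x35^+2 + x45^+2.
set Pf := x01 * Q1 - x02 * Q2 + x03 * Q3 - x04 * Q4 + x05 * Q5.
have h1 : Pf^+2 <= A * (Q1^+2 + Q2^+2 + Q3^+2 + Q4^+2 + Q5^+2).
  by apply: (cs5' (y1:=x01) (y2:=-x02) (y3:=x03) (y4:=-x04) (y5:=x05)
    (q1:=Q1) (q2:=Q2) (q3:=Q3) (q4:=Q4) (q5:=Q5)); rewrite /Pf /A; ring.
have hq1 : 4%:R * Q1^+2 <= T1^+2 by exact: q4.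
have hq2 : 4%:R * Q2^+2 <= T2^+2 by exact: q4.
have hq3 : 4%:R * Q3^+2 <= T3^+2 by exact: q4.
have hq4 : 4%:R * Q4^+2 <= T4^+2 by exact: q4.
have hq5 : 4%:R * Q5^+2 <= T5^+2 by exact: q4.
have sx01 := sqr_ge0 x01.
have sx02 := sqr_ge0 x02.
have sx03 := sqr_ge0 x03.
have sx04 := sqr_ge0 x04.
have sx05 := sqr_ge0 x05.
have sx12 := sqr_ge0 x12.
have sx13 := sqr_ge0 x13.
have sx14 := sqr_ge0 x14.
have sx15 := sqr_ge0 x15.
have sx23 := sqr_ge0 x23.
have sx24 := sqr_ge0 x24.
have sx25 := sqr_ge0 x25.
have sx34 := sqr_ge0 x34.
have sx35 := sqr_ge0 x35.
have sx45 := sqr_ge0 x45.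
have hC : 0 <= C by rewrite /C; lra.
have hA : 0 <= A by rewrite /A; lra.
have ht1 : T1^+2 <= C * T1 by apply: sq_le; rewrite /T1 /C; lra.
have ht2 : T2^+2 <= C * T2 by apply: sq_le; rewrite /T2 /C; lra.
have ht3 : T3^+2 <= C * T3 by apply: sq_le; rewrite /T3 /C; lra.
have ht4 : T4^+2 <= C * T4 by apply: sq_le; rewrite /T4 /C; lra.
have ht5 : T5^+2 <= C * T5 by apply: sq_le; rewrite /T5 /C; lra.
have hsum : C * T1 + C * T2 + C * T3 + C * T4 + C * T5 = 3%:R * C^+2.
  by rewrite /C /T1 /T2 /T3 /T4 /T5; ring.
have -> : x01^+2 + x02^+2 + x03^+2 + x04^+2 + x05^+2 + x12^+2 + x13^+2 + x14^+2 + x15^+2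
      + x23^+2 + x24^+2 + x25^+2 + x34^+2 + x35^+2 + x45^+2 = A + C by rewrite /A /C; ring.
apply: (chain hA hC h1 (ST := T1^+2 + T2^+2 + T3^+2 + T4^+2 + T5^+2)).
  lra.
rewrite -hsum; lra.
Qed.

End Poly.

Definition mk (bs : seq bool) : {set 'I_6} := [set i : 'I_6 | nth false bs i].
Arguments mk : simpl never.
Fixpoint allb n : seq (seq bool) :=
  if n is n'.+1 then [seq b :: l | b <- [:: true; false], l <- allb n'] else [:: [::]].
Definition allbits := allb 6.
Fixpoint nsum (l : seq nat) : nat := if l is x :: l' then Nat.add x (nsum l') else 0%N.
Lemma nsumE l : nsum l = sumn l. Proof. by elim: l => //= x l ->. Qed.

Definition cardb bs := nsum [seq nat_of_bool (nth false bs i) | i <- iota 0 6].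
Definition kbits k := [seq bs <- allbits | cardb bs == k].
Definition subb bs cs := all (fun i => nth false bs i ==> nth false cs i) (iota 0 6).
Definition diffb cs bs := [seq nth false cs i && ~~ nth false bs i | i <- iota 0 6].
Definition ninvb bs cs := nsum [seq nsum [seq nat_of_bool [&& nth false bs p, nth false cs q & (q < p)%N]
   | q <- iota 0 6] | p <- iota 0 6].
Definition eqb6 bs cs := all (fun i => nth false bs i == nth false cs i) (iota 0 6).

Lemma in_mk (i : 'I_6) bs : (i \in mk bs) = nth false bs i.
Proof. by rewrite inE. Qed.

Lemma sum_ord6 (f : nat -> nat) : (\sum_(i < 6) f i)%N = sumn [seq f i | i <- iota 0 6].
Proof. by rewrite sumnE big_map -(big_mkord xpredT f). Qed.

Lemma card_mk bs : #|mk bs| = cardb bs.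
Proof.
rewrite -sum1_card big_mkcond /=.
transitivity (\sum_(i < 6) nat_of_bool (nth false bs i))%N.
  by apply: eq_bigr => i _; rewrite in_mk; case: nth.
rewrite /cardb nsumE; exact: (sum_ord6 (fun i => nat_of_bool (nth false bs i))).
Qed.

Lemma N_mk bs cs : N (mk bs) (mk cs) = ninvb bs cs.
Proof.
rewrite /N -sum1_card big_mkcond /=.
transitivity (\sum_(p < 6) (\sum_(q < 6) nat_of_bool [&& nth false bs p, nth false cs q & (q < p)%N]))%N.
  rewrite pair_big /=; apply: eq_bigr => -[p q] _ /=.
  by rewrite !inE /= -andbA; case: (_ && _).
rewrite /ninvb nsumE.
transitivity (sumn [seq (\sum_(q < 6) nat_of_bool [&& nth false bs p, nth false cs q & (q < p)%N])%N | p <- iota 0 6]).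
  exact: (sum_ord6 (fun p => \sum_(q < 6) nat_of_bool [&& nth false bs p, nth false cs q & (q < p)%N]))%N.
congr sumn; apply: eq_map => p; rewrite nsumE.
exact: (sum_ord6 (fun q => nat_of_bool [&& nth false bs p, nth false cs q & (q < p)%N])).
Qed.

Lemma subset_mk bs cs : (mk bs \subset mk cs) = subb bs cs.
Proof.
apply/subsetP/allP => [h i|h x]; first rewrite mem_iota /= => lt6.
  by apply/implyP => hb; have := h (Ordinal lt6); rewrite !in_mk; apply.
rewrite !in_mk => hb; have := h x; rewrite mem_iota /= ltn_ord => /(_ isT) /implyP; exact.
Qed.

Lemma setD_mk cs bs : mk cs :\: mk bs = mk (diffb cs bs).
Proof.
apply/setP => x; rewrite !inE (nth_map 0) ?size_iota ?ltn_ord // nth_iota ?ltn_ord //.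
by rewrite andbC.
Qed.

Lemma eq_mk cs bs : (mk cs == mk bs) = eqb6 cs bs.
Proof.
apply/eqP/allP => [h i|h]; first rewrite mem_iota /= => lt6.
  by move/setP: h => /(_ (Ordinal lt6)); rewrite !in_mk => ->.
apply/setP => x; rewrite !in_mk; apply/eqP; apply: h; by rewrite mem_iota /= ltn_ord.
Qed.

Definition bitsof (K : {set 'I_6}) : seq bool := mkseq (fun i => inord i \in K) 6.

Lemma mk_bitsof K : mk (bitsof K) = K.
Proof. by apply/setP => x; rewrite in_mk nth_mkseq ?ltn_ord // inord_val. Qed.

Lemma mem_allb n l : size l = n -> l \in allb n.
Proof.
elim: n l => [|n IH] [|b l] //= [sl].
rewrite !mem_cat; case: b; [apply/orP; left | apply/orP; right; apply/orP; left]; apply: map_f; exact: IH.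
Qed.

Lemma mk_inj_allbits : {in allbits &, injective mk}.
Proof.
have hs : all (fun l => size l == 6) allbits by [].
move=> x y /(allP hs) /eqP sx /(allP hs) /eqP sy /eqP; rewrite eq_mk => /allP h.
apply: (@eq_from_nth _ false); first by rewrite sx sy.
by move=> i; rewrite sx => lt6; apply/eqP/h; rewrite mem_iota.
Qed.

Lemma kbits1 : kbits 1 = [:: [:: true; false; false; false; false; false];
  [:: false; true; false; false; false; false];
  [:: false; false; true; false; false; false];
  [:: false; false; false; true; false; false];
  [:: false; false; false; false; true; false];
  [:: false; false; false; false; false; true]].
Proof. by []. Qed.

Lemma kbits2 : kbits 2 = [:: [:: true; true; false; false; false; false];
  [:: true; false; true; false; false; false];
  [:: true; false; false; true; false; false];
  [:: true; false; false; false; true; false];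
  [:: true; false; false; false; false; true];
  [:: false; true; true; false; false; false];
  [:: false; true; false; true; false; false];
  [:: false; true; false; false; true; false];
  [:: false; true; false; false; false; true];
  [:: false; false; true; true; false; false];
  [:: false; false; true; false; true; false];
  [:: false; false; true; false; false; true];
  [:: false; false; false; true; true; false];
  [:: false; false; false; true; false; true];
  [:: false; false; false; false; true; true]].
Proof. by []. Qed.

Lemma kbits4 : kbits 4 = [:: [:: true; true; true; true; false; false];
  [:: true; true; true; false; true; false];
  [:: true; true; true; false; false; true];
  [:: true; true; false; true; true; false];
  [:: true; true; false; true; false; true];
  [:: true; true; false; false; true; true];
  [:: true; false; true; true; true; false];
  [:: true; false; true; true; false; true];
  [:: true; false; true; false; true; true];
  [:: true; false; false; true; true; true];
  [:: false; true; true; true; true; false];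
  [:: false; true; true; true; false; true];
  [:: false; true; true; false; true; true];
  [:: false; true; false; true; true; true];
  [:: false; false; true; true; true; true]].
Proof. by []. Qed.

Lemma kbits6 : kbits 6 = [:: [:: true; true; true; true; true; true]].
Proof. by []. Qed.


Definition e0 := [:: true; false; false; false; false; false].
Definition e1 := [:: false; true; false; false; false; false].
Definition e2 := [:: false; false; true; false; false; false].
Definition e3 := [:: false; false; false; true; false; false].
Definition e4 := [:: false; false; false; false; true; false].
Definition e5 := [:: false; false; false; false; false; true].

Lemma split_cond (I J K : {set 'I_6}) :
  (I :|: J == K) && (I :&: J == set0) = (I \subset K) && (J == K :\: I).
Proof.
apply/andP/andP => [[/eqP <- /eqP dIJ]|[sIK /eqP ->]].
- split; first exact: subsetUl.
  apply/eqP; rewrite setDUl setDv set0U; apply/esym/setDidPl.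
  by rewrite -setI_eq0 setIC dIJ.
- split.
    apply/eqP/setP => x; rewrite !inE; case: (boolP (x \in I)) => //= xI.
    by rewrite (subsetP sIK).

  by rewrite setDE setICA setICr setI0.
Qed.

Arguments subb bs cs /.
Arguments diffb cs bs /.
Arguments ninvb bs cs /.
Arguments eqb6 bs cs /.

Section Sums.
Variable R : realFieldType.
Implicit Types (phi psi : xform R).

Fixpoint lsum (l : seq (seq bool)) (f : seq bool -> R) : R :=
  if l is x :: l' then f x + lsum l' f else 0.
Lemma lsumE l f : lsum l f = \sum_(x <- l) f x.
Proof. by elim: l => [|x l IH] /=; rewrite ?big_nil ?big_cons ?IH. Qed.

Lemma eq_lsum l f g : f =1 g -> lsum l f = lsum l g.
Proof. by move=> h; elim: l => //= x l ->; rewrite h. Qed.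

Lemma sum_sets (F : {set 'I_6} -> R) : \sum_K F K = \sum_(bs <- allbits) F (mk bs).
Proof.
rewrite -(big_map mk predT F); apply: perm_big; apply: uniq_perm.
- exact: index_enum_uniq.
- by rewrite map_inj_in_uniq //; exact: mk_inj_allbits.
move=> K; rewrite mem_index_enum; symmetry; apply/mapP; exists (bitsof K).
  by apply: mem_allb; rewrite size_mkseq.
by rewrite mk_bitsof.
Qed.

Lemma sum_sets_k k (F : {set 'I_6} -> R) : (forall K : {set 'I_6}, #|K| != k -> F K = 0) ->
  \sum_K F K = lsum (kbits k) (fun bs => F (mk bs)).
Proof.
move=> h; rewrite lsumE sum_sets /kbits big_filter [RHS]big_mkcond; apply: eq_bigr => bs _.
by case: eqP => // hc; rewrite h // card_mk; apply/eqP.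
Qed.

Lemma wedgeE_sub phi psi (K : {set 'I_6}) : wedge phi psi K =
  \sum_(I : {set 'I_6}) (if I \subset K then wsign R I (K :\: I) * phi I * psi (K :\: I) else 0).
Proof.
rewrite ffunE; apply: eq_bigr => I _.
under eq_bigr => J _ do rewrite split_cond.
case: (boolP (I \subset K)) => sIK /=; last by rewrite big1.
by rewrite -big_mkcond big_pred1_eq.
Qed.

Lemma wedge_mk_k k phi psi cs : is_kform k phi -> wedge phi psi (mk cs) =
  lsum (kbits k) (fun bs => if subb bs cs then (-1) ^+ ninvb bs (diffb cs bs) * phi (mk bs)
                          * psi (mk (diffb cs bs)) else 0).
Proof.
move=> h; rewrite wedgeE_sub (@sum_sets_k k).
  by apply: eq_lsum => bs; rewrite subset_mk setD_mk wsignE N_mk.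
by move=> K nK; rewrite h // mulr0 mul0r; case: ifP.
Qed.

Lemma D_mk bs cs : D R (mk bs) (mk cs) = (eqb6 cs bs)%:R.
Proof. by rewrite DE eq_mk. Qed.

Lemma kform_d bs : is_kform (cardb bs) (D R (mk bs)).
Proof. by rewrite -card_mk; exact: kform_D. Qed.

Lemma ineq2 (x01 x02 x03 x04 x05 x12 x13 x14 x15 x23 x24 x25 x34 x35 x45 L S : R) :
  L = x02^+2 + x03^+2 + x04^+2 + x05^+2 + x12^+2 + x13^+2 + x14^+2 + x15^+2 + x24^+2 + x25^+2
      + x34^+2 + x35^+2 + (x01 + x23)^+2 + (x01 + x45)^+2 + (x23 + x45)^+2 ->
  S = x01^+2 + x02^+2 + x03^+2 + x04^+2 + x05^+2 + x12^+2 + x13^+2 + x14^+2 + x15^+2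
      + x23^+2 + x24^+2 + x25^+2 + x34^+2 + x35^+2 + x45^+2 ->
  L <= 4%:R * S.
Proof.
move=> -> ->.
have sx01 := sqr_ge0 x01.
have sx02 := sqr_ge0 x02.
have sx03 := sqr_ge0 x03.
have sx04 := sqr_ge0 x04.
have sx05 := sqr_ge0 x05.
have sx12 := sqr_ge0 x12.
have sx13 := sqr_ge0 x13.
have sx14 := sqr_ge0 x14.
have sx15 := sqr_ge0 x15.
have sx23 := sqr_ge0 x23.
have sx24 := sqr_ge0 x24.
have sx25 := sqr_ge0 x25.
have sx34 := sqr_ge0 x34.
have sx35 := sqr_ge0 x35.
have sx45 := sqr_ge0 x45.
have d1 := sqr_ge0 (x01 - x23).
have d2 := sqr_ge0 (x01 - x45).
have d3 := sqr_ge0 (x23 - x45).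
lra.
Qed.

Definition om0 := wedge (D R (mk e0)) (D R (mk e1)) + wedge (D R (mk e2)) (D R (mk e3))
             + wedge (D R (mk e4)) (D R (mk e5)).

Lemma kform_om0 : is_kform 2 om0.
Proof.
have k1 : forall bs, cardb bs = 1%N -> is_kform 1 (D R (mk bs)) by move=> bs <-; exact: kform_d.
by do 2?apply: kform_add; apply: (kform_wedge (k:=1) (l:=1)); apply: k1.
Qed.

Lemma setI_mk bs cs : mk bs :&: mk cs = mk [seq nth false bs i && nth false cs i | i <- iota 0 6].
Proof. by apply/setP => x; rewrite !inE (nth_map 0) ?size_iota ?ltn_ord // nth_iota ?ltn_ord. Qed.
Lemma setU_mk bs cs : mk bs :|: mk cs = mk [seq nth false bs i || nth false cs i | i <- iota 0 6].
Proof. by apply/setP => x; rewrite !inE (nth_map 0) ?size_iota ?ltn_ord // nth_iota ?ltn_ord. Qed.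
Lemma set0_mk : set0 = mk [:: false; false; false; false; false; false].
Proof. by apply/setP => x; rewrite !inE; case: x => -[|[|[|[|[|[|n]]]]]]. Qed.

Definition b01 := [:: true; true; false; false; false; false].
Definition b23 := [:: false; false; true; true; false; false].
Definition b45 := [:: false; false; false; false; true; true].

Lemma om0_form : om0 = D R (mk b01) + D R (mk b23) + D R (mk b45).
Proof.
by rewrite /om0 !wedge_DD -!setI_eq0 !setI_mk set0_mk !eq_mk /= !wsignE !N_mk /= !expr0 !sc1 !setU_mk.
Qed.

Lemma om0_mk cs : om0 (mk cs) = (eqb6 cs b01)%:R + (eqb6 cs b23)%:R + (eqb6 cs b45)%:R.
Proof. by rewrite om0_form !addfE !D_mk. Qed.

Lemma concrete1 (a : xform R) (Ha : is_kform 2 a) :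
  \sum_K (a K)^+2 + \sum_K (sc (2%:R^-1) (wedge (wedge om0 om0) a) K)^+2
   = \sum_K (wedge a om0 K)^+2 /\
  \sum_K (wedge a om0 K)^+2 <= 4%:R * \sum_K (a K)^+2.
Proof.
have kaom : is_kform 4 (wedge a om0) by apply: (kform_wedge Ha kform_om0).
have koo : is_kform 4 (wedge om0 om0) by apply: (kform_wedge kform_om0 kform_om0).
have kooa : is_kform 6 (wedge (wedge om0 om0) a) by apply: (kform_wedge koo Ha).
rewrite (@sum_sets_k 2); last by move=> K nK; rewrite Ha // expr0n.
rewrite (@sum_sets_k 4 (fun K => (wedge a om0 K)^+2)); last by move=> K nK; rewrite kaom // expr0n.
rewrite (@sum_sets_k 6); last by move=> K nK; rewrite scE kooa // mulr0 expr0n.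
rewrite kbits2 kbits4 kbits6 /= !scE.
rewrite !(wedge_mk_k _ _ Ha) !(wedge_mk_k _ _ koo) kbits2 kbits4 /=.
rewrite !(wedge_mk_k _ _ kform_om0) kbits2 /=.
rewrite !om0_mk /=.
set x01 := a (mk [:: true; true; false; false; false; false]).
set x02 := a (mk [:: true; false; true; false; false; false]).
set x03 := a (mk [:: true; false; false; true; false; false]).
set x04 := a (mk [:: true; false; false; false; true; false]).
set x05 := a (mk [:: true; false; false; false; false; true]).
set x12 := a (mk [:: false; true; true; false; false; false]).
set x13 := a (mk [:: false; true; false; true; false; false]).
set x14 := a (mk [:: false; true; false; false; true; false]).
set x15 := a (mk [:: false; true; false; false; false; true]).
set x23 := a (mk [:: false; false; true; true; false; false]).
set x24 := a (mk [:: false; false; true; false; true; false]).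
set x25 := a (mk [:: false; false; true; false; false; true]).
set x34 := a (mk [:: false; false; false; true; true; false]).
set x35 := a (mk [:: false; false; false; true; false; true]).
set x45 := a (mk [:: false; false; false; false; true; true]).
split.
  by field.
apply: (@ineq2 x01 x02 x03 x04 x05 x12 x13 x14 x15 x23 x24 x25 x34 x35 x45 _ _); ring.
Qed.


Lemma concrete3 (a : xform R) (Ha : is_kform 2 a) :
  \sum_K (wedge a (wedge a a) K)^+2 <= 6%:R * (\sum_K (a K)^+2)^+3.
Proof.
have k3 : is_kform 6 (wedge a (wedge a a)) by apply: (kform_wedge Ha (kform_wedge Ha Ha)).
rewrite (@sum_sets_k 2 (fun K => (a K)^+2)); last by move=> K nK; rewrite Ha // expr0n.
rewrite (@sum_sets_k 6 (fun K => (wedge a (wedge a a) K)^+2)); last by move=> K nK; rewrite k3 // expr0n.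
rewrite kbits2 kbits6 /= addr0.
rewrite (wedge_mk_k _ _ Ha) kbits2 /=.
rewrite !(wedge_mk_k _ _ Ha) kbits2 /=.
set x01 := a (mk [:: true; true; false; false; false; false]).
set x02 := a (mk [:: true; false; true; false; false; false]).
set x03 := a (mk [:: true; false; false; true; false; false]).
set x04 := a (mk [:: true; false; false; false; true; false]).
set x05 := a (mk [:: true; false; false; false; false; true]).
set x12 := a (mk [:: false; true; true; false; false; false]).
set x13 := a (mk [:: false; true; false; true; false; false]).
set x14 := a (mk [:: false; true; false; false; true; false]).
set x15 := a (mk [:: false; true; false; false; false; true]).
set x23 := a (mk [:: false; false; true; true; false; false]).
set x24 := a (mk [:: false; false; true; false; true; false]).
set x25 := a (mk [:: false; false; true; false; false; true]).
set x34 := a (mk [:: false; false; false; true; true; false]).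
set x35 := a (mk [:: false; false; false; true; false; true]).
set x45 := a (mk [:: false; false; false; false; true; true]).
apply: (@pf_ineq R x01 x02 x03 x04 x05 x12 x13 x14 x15 x23 x24 x25 x34 x35 x45 _ _); ring.
Qed.

End Sums.

Lemma s0 : [set i0] = mk e0.
Proof. by apply/setP => x; rewrite in_mk inE; case: x => -[|[|[|[|[|[|n]]]]]] h. Qed.
Lemma s1 : [set i1] = mk e1.
Proof. by apply/setP => x; rewrite in_mk inE; case: x => -[|[|[|[|[|[|n]]]]]] h. Qed.
Lemma s2 : [set i2] = mk e2.
Proof. by apply/setP => x; rewrite in_mk inE; case: x => -[|[|[|[|[|[|n]]]]]] h. Qed.
Lemma s3 : [set i3] = mk e3.
Proof. by apply/setP => x; rewrite in_mk inE; case: x => -[|[|[|[|[|[|n]]]]]] h. Qed.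
Lemma s4 : [set i4] = mk e4.
Proof. by apply/setP => x; rewrite in_mk inE; case: x => -[|[|[|[|[|[|n]]]]]] h. Qed.
Lemma s5 : [set i5] = mk e5.
Proof. by apply/setP => x; rewrite in_mk inE; case: x => -[|[|[|[|[|[|n]]]]]] h. Qed.

Section Main.
Variable R : realFieldType.

Lemma ecoords_basis (E : 'M[R]_6) (i : 'I_6) : E \in unitmx ->
  ext_map (invmx E) (ebasis E i) = D R [set i].
Proof.
move=> Eu; rewrite /ebasis ext_map_one -row_mul mulmxV //.
apply/ffunP => K; rewrite ffunE DE (bigD1 i) //= [X in _ + X]big1 ?addr0.
  by rewrite !mxE eqxx; case: eqP.
by move=> j nj; rewrite !mxE (_ : (i == j) = false); [case: ifP | rewrite eq_sym; exact: negbTE].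
Qed.

End Main.

Unset Implicit Arguments.
Theorem lemma4p1 (R : realFieldType) (E : 'M[R]_6) (omega rho alpha : xform R) :
  su3_adapted E omega rho ->
  is_kform 2 alpha ->
  [/\ sqnorm E alpha + sqnorm E ([ffun K => (2%:R)^-1 * wedge (wedge omega omega) alpha K])
        = sqnorm E (wedge alpha omega),
      sqnorm E (wedge alpha omega) <= 4%:R * sqnorm E alpha
    & sqnorm E (wedge alpha (wedge alpha alpha)) <= 6%:R * (sqnorm E alpha) ^+ 3].
Proof.
move=> [Eu -> _] Ha.
have hom : ext_map (invmx E) (su3_omega E) = om0 R.
  by rewrite /su3_omega !ext_mapD !ext_map_hom !ecoords_basis // s0 s1 s2 s3 s4 s5.
have ka : is_kform 2 (ext_map (invmx E) alpha) by exact: kform_ext.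
have -> : [ffun K => (2%:R)^-1 * wedge (wedge (su3_omega E) (su3_omega E)) alpha K]
   = sc (2%:R^-1) (wedge (wedge (su3_omega E) (su3_omega E)) alpha) by [].
rewrite /sqnorm /ecoords ext_mapZ !ext_map_hom hom.
have [c1 c2] := concrete1 ka; have c3 := concrete3 ka.
split.
exact c1. exact c2. exact c3.
Qed.
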